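(* Let $A,B$ be $K$-algebras with filtrations $\mathcal{F}=\{V_i\}_{i\ge0}$ and $\mathcal{G}=\{W_i\}_{i\ge0}$ respectively, and equip $A\oplus B$ with the filtration $\mathcal{H}=\{V_i\oplus W_i\}_{i\ge0}$. Then $$\mathrm{h}_{\mathrm{alg}}(A\oplus B,\mathcal{H})=\max\{\mathrm{h}_{\mathrm{alg}}(A,\mathcal{F}),\mathrm{h}_{\mathrm{alg}}(B,\mathcal{G})\}.$$
   Context: A filtration of $A$ is a family $\{V_n\}_{n\ge0}$ of subspaces with $0=V_0\subseteq V_1\subseteq\cdots$, $A=\bigcup_nV_n$, $V_nV_m\subseteq V_{n+m}$, with finite-dimensional quotients. $\mathrm{h}_{\mathrm{alg}}(A,\mathcal{F})=0$ if $A$ is finite-dimensional and otherwise $\limsup_n\frac1n\log\dim(V_n/V_{n-1})$. $A\oplus B$ is the direct product algebra with componentwise operations. *)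

(* Defs.v *)
From HB Require Import structures.
From mathcomp Require Import all_boot all_order all_algebra.
From mathcomp Require Import all_classical all_reals.
From mathcomp Require Import ereal sequences exp.
Set Implicit Arguments. Unset Strict Implicit. Unset Printing Implicit Defensive.
Import Order.TTheory GRing.Theory Num.Theory.
Local Open Scope classical_set_scope.
Local Open Scope ring_scope.

Section Filtrations.
Variables (K : fieldType) (A : algType K).

Definition is_subspace (U : set A) : Prop :=
  U 0 /\ forall (k : K) (u v : A), U u -> U v -> U (k *: u + v).

Definition lin_indep_mod (W : set A) (s : seq A) : Prop :=
  forall c : 'I_(size s) -> K,
    W (\sum_(i < size s) c i *: s`_i) -> forall i, c i = 0.

Definition spans_mod (V W : set A) (s : seq A) : Prop :=
  (forall x, x \in s -> V x) /\
  forall v, V v -> exists c : 'I_(size s) -> K,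
      W (v - \sum_(i < size s) c i *: s`_i).

Definition basis_mod (V W : set A) (s : seq A) : Prop :=
  lin_indep_mod W s /\ spans_mod V W s.

Definition fin_quot (V W : set A) : Prop := exists s, basis_mod V W s.

(* dim (V / W) when it is finite-dimensional (0 otherwise, never used) *)
Definition qdim (V W : set A) : nat :=
  match pselect (fin_quot V W) with
  | left h => size (projT1 (cid h))
  | right _ => 0%N
  end.

Definition fin_dim_alg : Prop :=
  exists s : seq A, forall a : A, exists c : 'I_(size s) -> K,
      a = \sum_(i < size s) c i *: s`_i.

Definition is_filtration (V : nat -> set A) : Prop :=
  V 0%N = [set 0] /\
  (forall n, is_subspace (V n)) /\
  (forall n, V n `<=` V n.+1) /\
  (forall a, exists n, V n a) /\
  (forall n m x y, V n x -> V m y -> V (n + m)%N (x * y)) /\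
  (forall n, fin_quot (V n.+1) (V n)).

(* algebraic entropy h_alg(A, F) in the extended reals;
   log 0 is read as -oo *)
Definition h_alg (R : realType) (V : nat -> set A) : \bar R :=
  if pselect fin_dim_alg then 0%E
  else limn_esup (fun n : nat =>
         if qdim (V n) (V n.-1) == 0%N then -oo%E
         else ((ln (qdim (V n) (V n.-1))%:R) / n%:R)%:E).

End Filtrations.

Definition sum_filtration (K : fieldType) (A B : algType K)
  (V : nat -> set A) (W : nat -> set B) : nat -> set (A * B)%type :=
  fun n => [set x | V n x.1 /\ W n x.2].

(* Main.v *)
Require Import Defs.
From HB Require Import structures.
From mathcomp Require Import all_boot all_order all_algebra.
From mathcomp Require Import all_classical all_reals.
From mathcomp Require Import ereal sequences exp.
Import Order.TTheory GRing.Theory Num.Theory.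
Set Implicit Arguments. Unset Strict Implicit. Unset Printing Implicit Defensive.
Local Open Scope classical_set_scope.
Local Open Scope ring_scope.

Definition lc (K : fieldType) (M : lmodType K) (s : seq M) (c : nat -> K) : M :=
  \sum_(i < size s) c i *: s`_i.

Section LA.
Variables (K : fieldType) (A : algType K).

Definition cn n (c : 'I_n -> K) : nat -> K := fun k => oapp c 0 (insub k).

Lemma cnE n (c : 'I_n -> K) (i : 'I_n) : cn c i = c i.
Proof. by rewrite /cn valK. Qed.

Lemma lc_cn (s : seq A) (c : 'I_(size s) -> K) :
  \sum_(i < size s) c i *: s`_i = lc s (cn c).
Proof. by apply: eq_bigr => i _; rewrite cnE. Qed.

Lemma subspace_sum (U : set A) n (c : 'I_n -> K) (x : 'I_n -> A) :
  is_subspace U -> (forall i, U (x i)) -> U (\sum_(i < n) c i *: x i).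
Proof.
move=> [U0 UD] Ux; apply: (big_ind U) => //.
  by move=> u v Uu Uv; have := UD 1 u v Uu Uv; rewrite scale1r.
by move=> i _; have := UD (c i) (x i) 0 (Ux i) U0; rewrite addr0.
Qed.

Lemma subspaceD (U : set A) u v : is_subspace U -> U u -> U v -> U (u + v).
Proof. by move=> [_ UD] Uu Uv; have := UD 1 u v Uu Uv; rewrite scale1r. Qed.

Lemma subspaceN (U : set A) u : is_subspace U -> U u -> U (- u).
Proof.
move=> [U0 UD] Uu; have := UD (-1) u 0 Uu U0; by rewrite addr0 scaleN1r.
Qed.

Lemma subspaceB (U : set A) u v : is_subspace U -> U u -> U v -> U (u - v).
Proof. by move=> sU Uu Uv; apply: subspaceD => //; apply: subspaceN. Qed.

Lemma indepN (W : set A) s : lin_indep_mod W s ->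
  forall c : nat -> K, W (lc s c) -> forall i, (i < size s)%N -> c i = 0.
Proof.
move=> H c Wc i lti; exact: (H (fun j : 'I_(size s) => c j) Wc (Ordinal lti)).
Qed.

Lemma Nindep (W : set A) s :
  (forall c : nat -> K, W (lc s c) -> forall i, (i < size s)%N -> c i = 0) ->
  lin_indep_mod W s.
Proof.
move=> H c Wc i; rewrite -cnE; apply: H => //; by rewrite -lc_cn.
Qed.

Lemma spansN (V W : set A) s : spans_mod V W s ->
  forall v, V v -> exists c : nat -> K, W (v - lc s c).
Proof. by move=> [_ H] v Vv; have [c Hc] := H v Vv; exists (cn c); rewrite -lc_cn. Qed.

Lemma Nspans (V W : set A) s : (forall x, x \in s -> V x) ->
  (forall v, V v -> exists c : nat -> K, W (v - lc s c)) -> spans_mod V W s.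
Proof.
move=> H1 H2; split=> // v Vv; have [c Hc] := H2 v Vv.
by exists (fun j : 'I_(size s) => c j).
Qed.

Lemma indep_le_span (V W : set A) s t : is_subspace W ->
  lin_indep_mod W s -> (forall x, x \in s -> V x) -> spans_mod V W t ->
  (size s <= size t)%N.
Proof.
move=> sW Hs sV [_ Ht]; rewrite leqNgt; apply/negP => lt_ts.
have: forall j : 'I_(size s), exists c : 'I_(size t) -> K,
    W (s`_j - \sum_(i < size t) c i *: t`_i).
  by move=> j; apply: Ht; apply: sV; apply: mem_nth.
move=> /choice [C HC].
pose M : 'M[K]_(size s, size t) := \matrix_(j, i) C j i.
have rk : \rank (kermx M) != 0%N.
  rewrite mxrank_ker subn_eq0 -ltnNge; exact: leq_ltn_trans (rank_leq_col M) lt_ts.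
have nzM : kermx M != 0 by rewrite -mxrank_eq0.
have [j0 [k0 nz]] : exists j k, kermx M j k != 0.
  case: (pselect (exists j k, kermx M j k != 0)) => [//|H]; exfalso.
  move/negP: nzM; apply; apply/eqP/matrixP => j k; rewrite [RHS]mxE.
  idtac.
  case: (eqVneq (kermx M j k) 0) => // hn; exfalso; apply: H; by exists j, k.
pose u := row j0 (kermx M).
have uM : u *m M = 0 by apply/sub_kermxP; exact: row_sub.
have E : \sum_(j < size s) u 0 j *: \sum_(i < size t) C j i *: t`_i = 0.
  under eq_bigr do rewrite scaler_sumr.
  rewrite exchange_big /=; apply: big1 => i _.
  transitivity (((u *m M) 0 i) *: t`_i); last by rewrite uM mxE scale0r.
  rewrite mxE scaler_suml.
  by apply: eq_bigr => j _; rewrite scalerA /M !mxE.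
have Wsum : W (\sum_(j < size s) u 0 j *: s`_j).
  have -> : \sum_(j < size s) u 0 j *: s`_j =
     \sum_(j < size s) u 0 j *: (s`_j - \sum_(i < size t) C j i *: t`_i).
    by under [RHS]eq_bigr do rewrite scalerBr; rewrite sumrB E subr0.
  by apply: subspace_sum.
have := Hs (fun j => u 0 j) Wsum k0; rewrite /u mxE => /eqP; exact/negP.
Qed.

Lemma qdimE (V W : set A) s : is_subspace W -> basis_mod V W s -> qdim V W = size s.
Proof.
move=> sW bs; rewrite /qdim; case: pselect => [h|n]; last by exfalso; apply: n; exists s.
have hb := projT2 (cid h); move: (projT1 (cid h)) hb => b hb.
case: bs => [i1 sp1]; case: hb => [ib spb].
apply/eqP; rewrite eqn_leq; apply/andP; split.
  exact: (indep_le_span sW ib (proj1 spb) sp1).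
exact: (indep_le_span sW i1 (proj1 sp1) spb).
Qed.

Lemma lc_cat (s t : seq A) c :
  lc (s ++ t) c = lc s c + lc t (fun i => c (size s + i)%N).
Proof.
rewrite /lc size_cat big_split_ord /=; congr (_ + _); apply: eq_bigr => i _.
  by rewrite nth_cat /= ltn_ord.
by rewrite nth_cat /= ltnNge leq_addr /= addKn.
Qed.

Lemma fin_quot_refl (V : set A) : fin_quot V V.
Proof.
exists [::]; split; first by move=> c _ [].
split=> // v Vv; exists (fun _ => 0); by rewrite big_ord0 subr0.
Qed.

End LA.

From mathcomp Require Import zify.
From mathcomp Require Import lra.

Section PR.
Variables (K : fieldType) (A B : algType K).

Lemma pair_sum n (F : 'I_n -> A) (G : 'I_n -> B) :
  \sum_(i < n) ((F i, G i) : A * B) = (\sum_(i < n) F i, \sum_(i < n) G i).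
Proof.
elim: n F G => [|n IH] F G; first by rewrite !big_ord0.
by rewrite !big_ord_recr /= IH.
Qed.

Lemma lc_inl (s : seq A) c : lc (map (fun x => (x, 0 : B)) s) c = (lc s c, 0).
Proof.
rewrite /lc size_map.
transitivity (\sum_(i < size s) ((c i *: s`_i, 0) : A * B)).
  apply: eq_bigr => i _; rewrite (nth_map 0) //.
  by change ((c i *: s`_i, c i *: (0:B)) = (c i *: s`_i, 0)); rewrite scaler0.
by rewrite pair_sum big1_eq.
Qed.

Lemma lc_inr (t : seq B) c : lc (map (fun y => (0 : A, y)) t) c = (0, lc t c).
Proof.
rewrite /lc size_map.
transitivity (\sum_(i < size t) ((0, c i *: t`_i) : A * B)).
  apply: eq_bigr => i _; rewrite (nth_map 0) //.
  by change ((c i *: (0:A), c i *: t`_i) = (0, c i *: t`_i)); rewrite scaler0.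
by rewrite pair_sum big1_eq.
Qed.

Lemma lc_fst (s : seq (A * B)) c : (lc s c).1 = lc (map fst s) c.
Proof.
rewrite /lc size_map.
transitivity ((\sum_(i < size s) (((c i *: s`_i).1, (c i *: s`_i).2) : A * B)).1).
  by congr fst; apply: eq_bigr => i _; case: (c i *: s`_i).
rewrite pair_sum /=; apply: eq_bigr => i _; by rewrite (nth_map 0).
Qed.

Lemma lc_snd (s : seq (A * B)) c : (lc s c).2 = lc (map snd s) c.
Proof.
rewrite /lc size_map.
transitivity ((\sum_(i < size s) (((c i *: s`_i).1, (c i *: s`_i).2) : A * B)).2).
  by congr snd; apply: eq_bigr => i _; case: (c i *: s`_i).
rewrite pair_sum /=; apply: eq_bigr => i _; by rewrite (nth_map 0).
Qed.

Lemma basis_pair (V V' : set A) (W W' : set B) s t : V 0 -> W 0 ->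
  basis_mod V V' s -> basis_mod W W' t ->
  basis_mod [set x : A * B | V x.1 /\ W x.2] [set x | V' x.1 /\ W' x.2]
    (map (fun x => (x, 0 : B)) s ++ map (fun y => (0 : A, y)) t).
Proof.
move=> V0 W0 [i1 sps] [it spt]; split.
  apply: Nindep => c; rewrite lc_cat lc_inl lc_inr /= => -[H1 H2] i.
  rewrite addr0 in H1; rewrite add0r size_map in H2.
  rewrite size_cat !size_map => lti.
  case: (ltnP i (size s)) => h; first exact: (indepN i1 H1 h).
  have := indepN it H2 (i := (i - size s)%N); rewrite subnKC //; apply; lia.
apply: Nspans.
  move=> x; rewrite mem_cat => /orP [] /mapP [y yin ->] /=; split => //.
    exact: (proj1 sps _ yin).
  exact: (proj1 spt _ yin).
move=> [v1 v2] [/= Vv1 Wv2].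
have [c1 h1] := spansN sps Vv1; have [c2 h2] := spansN spt Wv2.
exists (fun k => if (k < size s)%N then c1 k else c2 (k - size s)%N).
rewrite lc_cat lc_inl lc_inr size_map.
have -> : lc s (fun k => if (k < size s)%N then c1 k else c2 (k - size s)%N) = lc s c1.
  by apply: eq_bigr => i _; rewrite ltn_ord.
have -> : lc t (fun i => if (size s + i < size s)%N then c1 (size s + i)%N
     else c2 (size s + i - size s)%N) = lc t c2.
  by apply: eq_bigr => i _; rewrite ltnNge leq_addr /= addKn.
by rewrite /= addr0 add0r.
Qed.

End PR.

Section FD.
Variables (K : fieldType) (A B : algType K).

Lemma fd_pair : fin_dim_alg A -> fin_dim_alg B -> fin_dim_alg (A * B)%type.
Proof.
move=> [s hs] [t ht].
exists (map (fun x => (x, 0 : B)) s ++ map (fun y => (0 : A, y)) t) => -[a b].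
have [c1 ->] := hs a; have [c2 ->] := ht b.
pose u := map (fun x => (x, 0 : B)) s ++ map (fun y => (0 : A, y)) t.
pose e := fun k : nat => if (k < size s)%N then cn c1 k else cn c2 (k - size s)%N.
exists (fun k : 'I_(size u) => e k).
transitivity (lc u e); last by [].
rewrite /u /e lc_cat lc_inl lc_inr size_map.
have -> : lc s (fun k => if (k < size s)%N then cn c1 k else cn c2 (k - size s)%N) = lc s (cn c1).
  by apply: eq_bigr => i _; rewrite ltn_ord.
have -> : lc t (fun i => if (size s + i < size s)%N then cn c1 (size s + i)%N
     else cn c2 (size s + i - size s)%N) = lc t (cn c2).
  by apply: eq_bigr => i _; rewrite ltnNge leq_addr /= addKn.
transitivity ((lc s (cn c1) + 0, 0 + lc t (cn c2)) : A * B); last by [].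
by rewrite addr0 add0r -!lc_cn.
Qed.

Lemma fd_fst : fin_dim_alg (A * B)%type -> fin_dim_alg A.
Proof.
move=> [s hs]; exists (map fst s) => a.
have [c hc] := hs (a, 0).
exists (fun i : 'I_(size (map fst s)) => cn c i).
change (a = lc (map fst s) (cn c)).
by rewrite -lc_fst -lc_cn -hc.
Qed.

Lemma fd_snd : fin_dim_alg (A * B)%type -> fin_dim_alg B.
Proof.
move=> [s hs]; exists (map snd s) => b.
have [c hc] := hs (0, b).
exists (fun i : 'I_(size (map snd s)) => cn c i).
change (b = lc (map snd s) (cn c)).
by rewrite -lc_snd -lc_cn -hc.
Qed.

Lemma subspace_pair (V : set A) (W : set B) : is_subspace V -> is_subspace W ->
  is_subspace [set x : A * B | V x.1 /\ W x.2].
Proof.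
move=> [V0 VD] [W0 WD]; split; first by split.
move=> k u v [/= u1 u2] [/= v1 v2].
by change (V (k *: u.1 + v.1) /\ W (k *: u.2 + v.2)); split; [apply: VD|apply: WD].
Qed.

Lemma filt_mono (V : nat -> set A) : is_filtration V ->
  forall n m, (n <= m)%N -> V n `<=` V m.
Proof.
move=> [_ [_ [Vs _]]] n m /subnK <-; elim: (m - n)%N => [|k IH] //=.
by move=> x /IH /Vs.
Qed.

Lemma fq (V : nat -> set A) : is_filtration V -> forall n, fin_quot (V n) (V n.-1).
Proof.
move=> hV [|n] /=; first exact: fin_quot_refl.
by case: hV => [_ [_ [_ [_ [_ h]]]]].
Qed.

Lemma subsp (V : nat -> set A) : is_filtration V -> forall n, is_subspace (V n).
Proof. by case=> [_ [h _]]. Qed.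

Lemma fd_eventually0 (V : nat -> set A) : is_filtration V -> fin_dim_alg A ->
  exists N, forall n, (N < n)%N -> qdim (V n) (V n.-1) = 0%N.
Proof.
move=> hV [s hs].
have [N HN] : exists N, forall x, x \in s -> V N x.
  elim: s {hs} => [|x s [N HN]]; first by exists 0%N.
  have [_ [_ [_ [hu _]]]] := hV; have [n hn] := hu x.
  exists (maxn n N) => y; rewrite inE => /orP [/eqP ->|ys].
    exact: (filt_mono hV (leq_maxl n N)).
  exact: (filt_mono hV (leq_maxr n N) (HN y ys)).
have all : forall a, V N a.
  move=> a; have [c ->] := hs a; apply: subspace_sum; first exact: subsp.
  by move=> i; apply: HN; apply: mem_nth.
exists N => n ltNn; apply: (@qdimE _ _ _ _ [::]); first exact: subsp.
split; first by move=> c _ [].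
split=> // v Vv; exists (fun _ => 0); rewrite big_ord0 subr0.
by apply: (filt_mono hV (n := N)) => //; by rewrite -ltnS (ltn_predK ltNn).
Qed.

Lemma filt_span (V : nat -> set A) : is_filtration V ->
  forall n, exists s : seq A, forall v, V n v -> exists c, v = lc s c.
Proof.
move=> hV; elim=> [|n [s hs]].
  exists [::] => v; case: hV => [-> _] ->; exists (fun _ => 0).
  by rewrite /lc big_ord0.
have [b [_ spb]] := fq hV n.+1.
exists (b ++ s) => v Vv; have [c hc] := spansN spb Vv.
have [d hd] := hs _ hc.
exists (fun k => if (k < size b)%N then c k else d (k - size b)%N).
rewrite lc_cat.
have -> : lc b (fun k => if (k < size b)%N then c k else d (k - size b)%N) = lc b c.
  by apply: eq_bigr => i _; rewrite ltn_ord.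
have -> : lc s (fun i => if (size b + i < size b)%N then c (size b + i)%N
     else d (size b + i - size b)%N) = lc s d.
  by apply: eq_bigr => i _; rewrite ltnNge leq_addr /= addKn.
by rewrite -hd addrC subrK.
Qed.

Lemma nfd_inf (V : nat -> set A) : is_filtration V -> ~ fin_dim_alg A ->
  forall N, exists n, (N <= n)%N /\ qdim (V n) (V n.-1) != 0%N.
Proof.
move=> hV nfd N; case: (pselect (exists n, (N <= n)%N /\ qdim (V n) (V n.-1) != 0%N)) => // H.
exfalso; apply: nfd.
have Z : forall n, (N <= n)%N -> qdim (V n) (V n.-1) = 0%N.
  move=> n Nn; case: (eqVneq (qdim (V n) (V n.-1)) 0%N) => // h.
  by exfalso; apply: H; exists n.
have step : forall n, (N <= n)%N -> V n.+1 `<=` V n.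
  move=> n Nn v Vv; have [b bb] := fq hV n.+1.
  have sb : size b = 0%N.
    by rewrite -(qdimE (subsp hV n) bb); apply: Z; lia.
  have [c hc] := spansN (proj2 bb) Vv.
  by move: hc; rewrite /lc sb big_ord0 subr0.
have subk : forall k, V (N + k)%N `<=` V N.
  elim=> [|k IH]; first by rewrite addn0.
  by rewrite addnS => v /(step _ (leq_addr _ _)) /IH.
have sub : forall n, V n `<=` V N.
  move=> n; case: (leqP n N) => [h|h]; first exact: filt_mono.
  by rewrite -(subnKC (ltnW h)); apply: subk.
have [s hs] := filt_span hV N.
have [_ [_ [_ [hu _]]]] := hV.
exists s => a; have [n hn] := hu a; have [c hc] := hs a (sub n a hn).
by exists (fun i : 'I_(size s) => c i).
Qed.

End FD.
Section AN.
Variable R : realType.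
Local Open Scope ereal_scope.
Implicit Types (u v w : (\bar R)^nat).

Lemma S_inf u : limn_esup u = ereal_inf (range (esups u)).
Proof. by rewrite limn_esup_lim; apply/cvg_lim => //; exact: cvg_esups_inf. Qed.

Lemma esups_ge u n m : (n <= m)%N -> u m <= esups u n.
Proof. by move=> nm; apply: ereal_sup_ubound; exists m. Qed.

Lemma S_le u v : (forall n, u n <= v n) -> limn_esup u <= limn_esup v.
Proof.
move=> uv; rewrite !S_inf; apply: le_ereal_inf_tmp => _ [n _ <-].
apply: le_trans (ereal_inf_lbound (ex_intro2 _ _ n I erefl)) _.
apply: ge_ereal_sup => _ [k nk <-]; exact: le_trans (uv k) (esups_ge _ nk).
Qed.

Lemma S_ge0 u : (forall N, exists n, (N <= n)%N /\ 0 <= u n) -> 0 <= limn_esup u.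
Proof.
move=> H; rewrite S_inf; apply: le_ereal_inf_tmp => _ [N _ <-].
have [n [Nn un]] := H N; exact: le_trans un (esups_ge _ Nn).
Qed.

Lemma S_Ny u N : (forall n, (N < n)%N -> u n = -oo) -> limn_esup u = -oo.
Proof.
move=> H; apply/eqP; rewrite -leeNy_eq S_inf.
apply: le_trans (ereal_inf_lbound (ex_intro2 _ _ N.+1 I erefl)) _.
by apply: ge_ereal_sup => _ [k Nk <-]; rewrite H.
Qed.

Lemma le_er (x M : \bar R) : (forall r : R, M < r%:E -> x <= r%:E) -> x <= M.
Proof.
case: M => [m| |] H; last 2 first.
- exact: leey.
- case: x H => [t| |] H //.
  + by have := H (t - 1)%R (ltNyr _); rewrite lee_fin => h; exfalso; lra.
  + by have := H 0%R (ltNyr _).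
case: x H => [t| |] H //.
- rewrite lee_fin; case: (lerP t m) => // mt.
  by have := H ((m + t) / 2)%R; rewrite !lte_fin lee_fin => /(_ ltac:(lra)) h; lra.
- by have := H (m + 1)%R; rewrite lte_fin => /(_ ltac:(lra)).
- exact: leNye.
Qed.

Lemma S_max_le u v w :
  (forall d : R, (0 < d)%R -> exists N, forall n, (N <= n)%N ->
      u n <= Order.max (v n) (w n) + d%:E) ->
  limn_esup u <= Order.max (limn_esup v) (limn_esup w).
Proof.
move=> H; apply: le_er => r hr.
have [r' [h1 h2]] : exists r' : R, Order.max (limn_esup v) (limn_esup w) < r'%:E /\ (r' < r)%R.
  move: hr; case: (Order.max _ _) => [m| |] //= hm.
    by exists ((m + r) / 2)%R; move: hm; rewrite !lte_fin; split; lra.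
  by exists (r - 1)%R; split; [exact: ltNyr|lra].
move: h1; rewrite gt_max => /andP [hv hw].
move: hv; rewrite S_inf => /ereal_inf_lt [_ [n1 _ <-] hn1].
move: hw; rewrite S_inf => /ereal_inf_lt [_ [n2 _ <-] hn2].
have [N HN] := H (r - r')%R ltac:(lra).
pose n0 := maxn (maxn n1 n2) N.
rewrite S_inf; apply: le_trans (ereal_inf_lbound (ex_intro2 _ _ n0 I erefl)) _.
apply: ge_ereal_sup => _ [m hm <-]; move: hm; rewrite /= /n0 !geq_max => /andP [/andP [m1 m2] mN].
apply: le_trans (HN m mN) _.
have -> : r%:E = r'%:E + (r - r')%:E by rewrite -EFinD; congr EFin; lra.
apply: leeD2r; rewrite ge_max; apply/andP; split.
  exact/ltW/(le_lt_trans (esups_ge _ m1) hn1).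
exact/ltW/(le_lt_trans (esups_ge _ m2) hn2).
Qed.

Definition g (d n : nat) : \bar R :=
  if d == 0%N then -oo else ((ln (d%:R : R)) / n%:R)%:E.

Lemma g_mono a b n : g a n <= g (a + b) n.
Proof.
rewrite /g; case: eqP => [_|/eqP a0]; first exact: leNye.
have -> : (a + b == 0)%N = false by rewrite addn_eq0 (negbTE a0).
rewrite lee_fin; apply: ler_wpM2r; first by rewrite invr_ge0.
by rewrite ler_ln ?posrE ?ltr0n ?lt0n ?addn_eq0 ?(negbTE a0) // ler_nat leq_addr.
Qed.

Lemma g_sum a b n : g (a + b) n <= Order.max (g a n) (g b n) + (ln 2 / n%:R)%:E.
Proof.
wlog ba : a b / (b <= a)%N.
  move=> W; case: (leqP b a) => h; first exact: W.
  by rewrite addnC maxC; apply: W; apply: ltnW.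
rewrite /g; case: eqP => [_|/eqP ab0]; first exact: leNye.
have a0 : (a != 0)%N by move: ab0; rewrite addn_eq0; apply: contra => /eqP a0; move: ba; rewrite a0 leqn0 => ->.
rewrite (negbTE a0).
apply: (@le_trans _ _ ((ln (a%:R : R) / n%:R)%:E + (ln 2 / n%:R)%:E)); last first.
  by apply: leeD2r; rewrite le_max lexx.
rewrite -EFinD lee_fin -mulrDl; apply: ler_wpM2r; first by rewrite invr_ge0.
rewrite addrC -lnM ?posrE ?ltr0n ?lt0n //.
rewrite ler_ln ?posrE ?mulr_gt0 ?ltr0n ?lt0n ?addn_eq0 ?(negbTE a0) //.
by rewrite -natrM ler_nat mul2n -addnn leq_add2l.
Qed.

Lemma ln2n_small (d : R) : (0 < d)%R -> exists N, forall n, (N <= n)%N ->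
  (ln 2 / n%:R <= d)%R.
Proof.
move=> d0; exists (Num.trunc (ln (2 : R) / d)).+1 => n hn.
have n0 : (0 < n%:R :> R)%R by rewrite ltr0n (leq_trans _ hn).
rewrite ler_pdivrMr // mulrC -ler_pdivrMr //.
apply: ltW; apply: (lt_le_trans (truncnS_gt _)); by rewrite ler_nat.
Qed.

Lemma S_g_sum (a b : nat -> nat) :
  limn_esup (fun n => g (a n + b n) n) =
  Order.max (limn_esup (fun n => g (a n) n)) (limn_esup (fun n => g (b n) n)).
Proof.
apply/eqP; rewrite eq_le; apply/andP; split.
  apply: S_max_le => d d0; have [N HN] := ln2n_small d0; exists N => n Nn.
  apply: le_trans (g_sum _ _ _) _; apply: leeD2l; rewrite lee_fin; exact: HN.
rewrite ge_max; apply/andP; split; apply: S_le => n; first exact: g_mono.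
by rewrite addnC; exact: g_mono.
Qed.

End AN.

Section MAIN.
Local Open Scope ereal_scope.

Lemma g_pos (R : realType) d n : (d != 0)%N -> 0 <= g R d n.
Proof.
move=> d0; rewrite /g (negbTE d0) lee_fin; apply: divr_ge0 => //.
by apply: ln_ge0; rewrite ler1n lt0n.
Qed.

Lemma h_algE (R : realType) (K : fieldType) (A : algType K) (V : nat -> set A) :
  h_alg R V = if pselect (fin_dim_alg A) then 0
    else limn_esup (fun n => g R (qdim (V n) (V n.-1)) n).
Proof. by []. Qed.

Lemma qdim_sum (K : fieldType) (A B : algType K) (V : nat -> set A) (W : nat -> set B) :
  is_filtration V -> is_filtration W -> forall n,
  qdim (sum_filtration V W n) (sum_filtration V W n.-1) =
  (qdim (V n) (V n.-1) + qdim (W n) (W n.-1))%N.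
Proof.
move=> hV hW n; have [s bs] := fq hV n; have [t bt] := fq hW n.
rewrite (qdimE (subsp hV n.-1) bs) (qdimE (subsp hW n.-1) bt).
rewrite (@qdimE _ _ (sum_filtration V W n) (sum_filtration V W n.-1)
   (map (fun x => (x, 0%R : B)) s ++ map (fun y => (0%R : A, y)) t)).
- by rewrite size_cat !size_map.
- by apply: subspace_pair; apply: subsp.
apply: basis_pair => //; [exact: (proj1 (subsp hV n))|exact: (proj1 (subsp hW n))].
Qed.

Lemma S_fin (R : realType) (K : fieldType) (A : algType K) (V : nat -> set A) :
  is_filtration V -> fin_dim_alg A ->
  limn_esup (fun n => g R (qdim (V n) (V n.-1)) n) = -oo.
Proof.
move=> hV fa; have [N HN] := fd_eventually0 hV fa.
by apply: (S_Ny (N := N)) => n /HN ->.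
Qed.

Lemma S_nfin (R : realType) (K : fieldType) (A : algType K) (V : nat -> set A) :
  is_filtration V -> ~ fin_dim_alg A ->
  0 <= limn_esup (fun n => g R (qdim (V n) (V n.-1)) n).
Proof.
move=> hV nfa; apply: S_ge0 => N; have [n [Nn hn]] := nfd_inf hV nfa N.
by exists n; split => //; apply: g_pos.
Qed.

End MAIN.

Theorem proposition4p7 (R : realType) (K : fieldType) (A B : algType K)
  (V : nat -> set A) (W : nat -> set B) :
  is_filtration V -> is_filtration W ->
  h_alg R (sum_filtration V W) = Order.max (h_alg R V) (h_alg R W).
Proof.
move=> hV hW; rewrite !h_algE.
case: pselect => [fab|nfab].
  case: (pselect (fin_dim_alg A)) => [fa|na]; last by exfalso; apply: na; exact: fd_fst fab.
  case: (pselect (fin_dim_alg B)) => [fb|nb]; last by exfalso; apply: nb; exact: fd_snd fab.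
  by rewrite maxxx.
have -> : (fun n => g R (qdim (sum_filtration V W n) (sum_filtration V W n.-1)) n) =
  (fun n => g R (qdim (V n) (V n.-1) + qdim (W n) (W n.-1)) n).
  by apply: funext => n; rewrite qdim_sum.
rewrite S_g_sum.
case: (pselect (fin_dim_alg A)) => [fa|nfa]; case: (pselect (fin_dim_alg B)) => [fb|nfb].
- by exfalso; apply: nfab; apply: fd_pair.
- rewrite (S_fin R hV fa) max_r ?leNye // max_r //; exact: S_nfin.
- rewrite (S_fin R hW fb) max_l ?leNye // max_l //; exact: S_nfin.
- by [].
Qed.
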